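(* Let $X$ and $Y$ be unit Fréchet random variables (distribution function $e^{-1/x}$, $x>0$) such that $\lambda:=\lim_{u\to\infty}\mathbb{P}(X>u\mid Y>u)=0$, and let $(X_i,Y_i)$, $i\ge1$, be i.i.d. copies of $(X,Y)$. Then, as $n\to\infty$, $q_n\to0$ almost surely and, for any fixed threshold $u>0$, $q_{u,n}\to0$ almost surely, where $$q_n=\frac{\max_{i\le n}\{Y_i/X_i\}+\max_{i\le n}\{X_i/Y_i\}-2}{\max_{i\le n}\{Y_i/X_i\}\max_{i\le n}\{X_i/Y_i\}-1},\qquad q_{u,n}=\frac{\max_{i\le n}\{(u+W_i)/(u+V_i)\}+\max_{i\le n}\{(u+V_i)/(u+W_i)\}-2}{\max_{i\le n}\{(u+W_i)/(u+V_i)\}\max_{i\le n}\{(u+V_i)/(u+W_i)\}-1},$$ with $W_i=(X_i-u)I_{\{X_i>u\}}$ and $V_i=(Y_i-u)I_{\{Y_i>u\}}$.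
   Context: The quantity $\lambda$ is the tail dependence index of $(X,Y)$; $X$ and $Y$ are called tail independent if $\lambda=0$. $q_n$ is the quotient correlation and $q_{u,n}$ the tail quotient correlation at threshold $u$; $W_i,V_i$ are the exceedances over $u$. *)

(* Defs.v *)
From HB Require Import structures.
From mathcomp Require Import all_boot all_order all_algebra.
From mathcomp Require Import all_classical all_reals all_analysis.
Set Implicit Arguments. Unset Strict Implicit. Unset Printing Implicit Defensive.
Import Order.TTheory GRing.Theory Num.Theory.
Import numFieldNormedType.Exports.
Local Open Scope classical_set_scope.
Local Open Scope ring_scope.

Section defs.
Context (R : realType).

Definition quot_corr (a b : R) : R := (a + b - 2) / (a * b - 1).

Definition qcorr {T : Type} (X Y : nat -> T -> R) (n : nat) (t : T) : R :=
  quot_corr (\big[Num.max/0]_(i < n) (Y i t / X i t))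
            (\big[Num.max/0]_(i < n) (X i t / Y i t)).

Definition exceed {T : Type} (u : R) (Z : T -> R) (t : T) : R :=
  if u < Z t then Z t - u else 0.

Definition tail_qcorr {T : Type} (u : R) (X Y : nat -> T -> R) (n : nat)
  (t : T) : R :=
  quot_corr
    (\big[Num.max/0]_(i < n) ((u + exceed u (X i) t) / (u + exceed u (Y i) t)))
    (\big[Num.max/0]_(i < n) ((u + exceed u (Y i) t) / (u + exceed u (X i) t))).
End defs.

Section prob.
Context {d : measure_display} {T : measurableType d} {R : realType}.
Local Open Scope ereal_scope.

Definition unit_frechet (P : probability T R) (Z : T -> R) : Prop :=
  measurable_fun setT Z /\
  forall x : R, P [set t | Z t <= x]%R =
    (if (0 < x)%R then expR (- x^-1) else 0%R)%:E.

Definition mutually_independent (P : probability T R) (Z : nat -> T -> R * R)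
  : Prop :=
  forall (s : seq nat) (A : nat -> set (R * R)),
    uniq s -> (forall i, measurable (A i)) ->
    P (\bigcap_(i in [set` s]) (Z i @^-1` A i)) =
    \big[*%E/1%E]_(i <- s) P (Z i @^-1` A i).

Definition identically_distributed (P : probability T R)
  (Z : nat -> T -> R * R) (W : T -> R * R) : Prop :=
  forall i (A : set (R * R)), measurable A -> P (Z i @^-1` A) = P (W @^-1` A).
End prob.

(* Main.v *)
Require Import Defs.
From HB Require Import structures.
From mathcomp Require Import all_boot all_order all_algebra.
From mathcomp Require Import all_classical all_reals all_analysis.
From mathcomp Require Import lra.
Import Order.TTheory GRing.Theory Num.Theory.
Import numFieldNormedType.Exports.
Local Open Scope classical_set_scope.
Local Open Scope ring_scope.
Set Implicit Arguments. Unset Strict Implicit.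

Lemma quot_small (R : realType) (a b K : R) : 2 <= K -> K <= a -> K <= b ->
  `|quot_corr a b| <= 4 / K.
Proof.
move=> K2 Ka Kb; rewrite /quot_corr.
have hab : K * K <= a * b by apply: ler_pM; lra.
have hd : 0 < a * b - 1 by nra.
rewrite ger0_norm; last by apply: divr_ge0; lra.
rewrite ler_pdivrMr // mulrC mulrA ler_pdivlMr; last lra.
have h1 : K * a <= a * b by rewrite mulrC; apply: ler_wpM2l; lra.
have h2 : K * b <= a * b by apply: ler_wpM2r; lra.
nra.
Qed.

Lemma quot_cvg (R : realType) (a b : nat -> R) :
  (forall N : nat, \forall n \near \oo, N%:R < a n) ->
  (forall N : nat, \forall n \near \oo, N%:R < b n) ->
  quot_corr (a n) (b n) @[n --> \oo] --> (0 : R).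
Proof.
move=> ha hb; apply/cvgrPdist_lt => e e0.
pose N := (Num.truncn (4 / e)).+2.
have hN : 4 / e < N%:R.
  apply: lt_le_trans (truncnS_gt _) _; rewrite ler_nat; exact: leqnSn.
have N2 : 2 <= (N%:R : R) by rewrite (ler_nat R 2 N).
apply: filterS2 (ha N) (hb N) => n h1 h2.
rewrite sub0r normrN.
have := @quot_small R _ _ _ N2 (ltW h1) (ltW h2).
move=> hq; apply: le_lt_trans hq _.
rewrite ltr_pdivrMr; last lra.
by rewrite mulrC -ltr_pdivrMr.
Qed.
Lemma small_zero (R : realType) (x r : R) : 0 <= r < 1 ->
  (forall n, x <= r ^+ n) -> x <= 0.
Proof.
move=> /andP[r0 r1] h; rewrite leNgt; apply/negP => x0.
have := cvg_geometric 1 (z:=r); rewrite ger0_norm // => /(_ r1).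
move=> /cvgrPdist_lt /(_ x x0) /filter_ex [n]; rewrite /geometric /= mul1r sub0r normrN.
rewrite ger0_norm ?exprn_ge0 // => hn.
by have := h n; rewrite leNgt hn.
Qed.

Lemma iter_mule (R : realType) (r : R) n :
  iter n (mule r%:E) 1%E = (r ^+ n)%:E :> \bar R.
Proof. by elim: n => //= n ->; rewrite -EFinM exprS. Qed.

Lemma ae_hit d (T : measurableType d) (R : realType) (P : probability T R)
  (Z : nat -> T -> R * R) (A : set (R * R)) :
  (forall i, measurable_fun setT (Z i)) -> mutually_independent P Z ->
  (forall i, P (Z i @^-1` A) = P (Z 0%N @^-1` A)) ->
  (forall i, P (Z i @^-1` ~` A) = P (Z 0%N @^-1` ~` A)) ->
  measurable A -> P (Z 0%N @^-1` A) != 0%E ->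
  {ae P, forall t, exists i, A (Z i t)}.
Proof.
move=> mZ ind idA idC mA PA.
have mpre : forall i (B : set (R * R)), measurable B -> measurable (Z i @^-1` B).
  by move=> i B mB; rewrite -[_ @^-1` _]setTI; apply: mZ.
exists (\bigcap_i Z i @^-1` ~` A); split.
- by apply: bigcap_measurableType => k _; apply: mpre; apply: measurableC.
- have hq : (P (Z 0%N @^-1` ~` A) = (1 - fine (P (Z 0%N @^-1` A)))%:E).
    rewrite preimage_setC probability_setC; last exact: mpre.
    by rewrite EFinB fineK ?fin_num_measure //; apply: mpre.
  have q0 : 0 < fine (P (Z 0%N @^-1` A)).
    rewrite lt_neqAle fine_ge0 ?measure_ge0 // andbT eq_sym.
    apply/negP => /eqP h; move/negP: PA; apply; apply/eqP.
    by rewrite -[LHS]fineK ?fin_num_measure ?h //; apply: mpre.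
  have q1 : fine (P (Z 0%N @^-1` A)) <= 1.
    rewrite -lee_fin fineK ?fin_num_measure ?probability_le1 //; exact: mpre.
  set q := fine _ in hq q0 q1.
  have hle : forall n, (P (\bigcap_i Z i @^-1` ~` A) <= ((1 - q) ^+ n)%:E)%E.
    move=> n.
    apply: (@le_trans _ _ (P (\bigcap_(i in [set` iota 0 n]) Z i @^-1` ~` A))).
      apply: le_measure; rewrite ?inE.
      + by apply: bigcap_measurableType => k _; apply: mpre; apply: measurableC.
      + by apply: bigcap_measurableType => k _; apply: mpre; apply: measurableC.
      + by move=> t ht i _; apply: ht.
    rewrite (ind (iota 0 n) (fun _ => ~` A)) ?iota_uniq //; last first.
      by move=> _; apply: measurableC.
    rewrite (eq_bigr (fun _ => (1 - q)%:E)); last by move=> i _; rewrite idC hq.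
    by rewrite big_const_seq count_predT size_iota iter_mule; apply: lexx.
  have hfin : P (\bigcap_i Z i @^-1` ~` A) \is a fin_num.
    by rewrite fin_num_measure //; apply: bigcap_measurableType => k _; apply: mpre; apply: measurableC.
  apply/eqP; rewrite eq_le; apply/andP; split; last exact: measure_ge0.
  rewrite -(fineK hfin) lee_fin; apply: (@small_zero R _ (1 - q)); first lra.
  by move=> n; rewrite -lee_fin fineK.
- by move=> t /= ht i _ hA; apply: ht; exists i.
Qed.
Lemma mset_lt d (T : measurableType d) (R : realType) (f g : T -> R) :
  measurable_fun setT f -> measurable_fun setT g -> measurable [set t | f t < g t].
Proof.
move=> mf mg.
have := measurable_realfun.measurable_fun_ltr mf mg measurableT (I : measurable [set true]).
by rewrite setTI.
Qed.

Lemma mset_le d (T : measurableType d) (R : realType) (f g : T -> R) :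
  measurable_fun setT f -> measurable_fun setT g -> measurable [set t | f t <= g t].
Proof.
move=> mf mg.
have := measurable_realfun.measurable_fun_ler mf mg measurableT (I : measurable [set true]).
by rewrite setTI.
Qed.

Lemma exp_bound (R : realType) (t M : R) : 0 < t <= 1 -> 1 <= M ->
  1 - expR (- t) <= (M + 1) * (1 - expR (- (t / M))).
Proof.
move=> /andP[t0 t1] M1.
set s := t / M.
have sM : s * M = t by rewrite /s mulfVK //; lra.
have s0 : 0 < s by rewrite /s divr_gt0 //; lra.
have h1 := expR_ge1Dx (- t).
have h2 : (1 + s) * expR (- s) <= 1.
  rewrite expRN ler_pdivrMr ?expR_gt0 // mul1r; exact: expR_ge1Dx.
have e2 := expR_gt0 (- s).
nra.
Qed.

Lemma frechet_gt d (T : measurableType d) (R : realType) (P : probability T R)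
  (Z : T -> R) (x : R) : unit_frechet P Z -> 0 < x ->
  P [set t | x < Z t] = (1 - expR (- x^-1))%:E.
Proof.
move=> [mZ hZ] x0.
have -> : [set t | x < Z t] = ~` [set t | Z t <= x].
  by apply/seteqP; split => t /=; rewrite ltNge => /negP.
rewrite probability_setC; last by apply: mset_le.
by rewrite hZ x0 EFinB.
Qed.

Lemma pos_lemma d (T : measurableType d) (R : realType) (P : probability T R)
  (X Y Z : T -> R) (S : set T) (M v0 : R) :
  unit_frechet P X -> unit_frechet P Y -> unit_frechet P Z ->
  (fun u : R => fine (P ([set t | u < X t] `&` [set t | u < Y t])) /
                fine (P [set t | u < Y t])) @ +oo --> (0 : R) ->
  1 <= M -> measurable S ->
  (forall v, v0 < v -> [set t | M * v < Z t] `<=`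
       ([set t | v < X t] `&` [set t | v < Y t]) `|` S) ->
  P S != 0%E.
Proof.
move=> fX fY fZ hlim M1 mS hinc; apply/negP => /eqP PS0.
have e0 : 0 < (M + 1)^-1 by rewrite invr_gt0; lra.
move/cvgrPdist_lt: hlim => /(_ _ e0) H.
have H2 : \forall u \near +oo, Num.max v0 1 < u by apply: nbhs_pinfty_gt; apply: num_real.
have H3 := @filterI _ _ (@filter_filter R _ (@proper_pinfty_nbhs R)) _ _ H H2.
have [v [hv1 hv2]] := @filter_ex _ _ (@proper_pinfty_nbhs R) _ H3.
move: hv2; rewrite gt_max => /andP[vv0 v1].
have mX := proj1 fX; have mY := proj1 fY.
have mI : measurable ([set t | v < X t] `&` [set t | v < Y t]).
  by apply: measurableI; apply: mset_lt.
have hPI : (P [set t | (M * v < Z t)%R] <= P ([set t | (v < X t)%R] `&` [set t | (v < Y t)%R]))%E.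
  apply: (@le_trans _ _ (P (([set t | v < X t] `&` [set t | v < Y t]) `|` S))%R).
    apply: le_measure; rewrite ?inE //.
    - by apply: mset_lt => //; exact: (proj1 fZ).
    - exact: measurableU.
    - exact: hinc.
  apply: le_trans (measureU2 _ mI mS) _.
  apply: (@le_trans _ _ (P ([set t | (v < X t)%R] `&` [set t | (v < Y t)%R]) + 0)%E); last by rewrite adde0.
  apply: leeD; first exact: lexx.
  rewrite -PS0; exact: lexx.
have Mv0 : 0 < M * v by apply: mulr_gt0; lra.
rewrite (frechet_gt fZ Mv0) in hPI.
have hY : P [set t | v < Y t] = (1 - expR (- v^-1))%:E by apply: (frechet_gt fY); lra.
rewrite hY /= sub0r normrN in hv1.
have hfin : P ([set t | v < X t] `&` [set t | v < Y t]) \is a fin_num by rewrite fin_num_measure.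
have hPI' : 1 - expR (- (M * v)^-1) <= fine (P ([set t | v < X t] `&` [set t | v < Y t])).
  by rewrite -lee_fin fineK.
have den0 : 0 < 1 - expR (- v^-1).
  rewrite subr_gt0 expR_lt1 oppr_lt0 invr_gt0; lra.
have t01 : 0 < v^-1 <= 1.
  rewrite invr_gt0 (lt_trans _ v1) //= invf_le1; lra.
have := exp_bound t01 M1.
have -> : v^-1 / M = (M * v)^-1 by rewrite invfM mulrC.
move=> hb.
move: hv1; rewrite ger0_norm; last first.
  by apply: divr_ge0; [apply: fine_ge0; apply: measure_ge0 | lra].
rewrite ltr_pdivrMr // => hv1.
have : (M + 1)^-1 * (1 - expR (- v^-1)) <= (1 - expR (- (M * v)^-1)).
  rewrite ler_pdivrMl; last lra.
  exact: hb.
lra.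
Qed.

Lemma ev_max (R : realType) (f : nat -> R) (c : R) :
  (exists i, c < f i) -> \forall n \near \oo, c < \big[Num.max/0]_(i < n) f i.
Proof.
move=> [i hi]; exists i.+1 => // n /= hn.
apply: lt_le_trans hi _.
exact: (le_bigmax 0 (fun j : 'I_n => f j) (Ordinal hn)).
Qed.

Lemma ratio_gt (R : realType) (M x y : R) : 0 < x -> M * x < y -> M < y / x.
Proof. by move=> x0 h; rewrite ltr_pdivlMr. Qed.

Lemma tail_ratio_gt (R : realType) (M u x y : R) : 0 < u -> 1 <= M ->
  M * u < y -> M * x < y ->
  M < (u + (if u < y then y - u else 0)) / (u + (if u < x then x - u else 0)).
Proof.
move=> u0 M1 hu hx.
have uy : u < y by nra.
rewrite uy addrC subrK.
case: ifP => ux.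
  by rewrite addrC subrK; apply: ratio_gt => //; lra.
by rewrite addr0; apply: ratio_gt.
Qed.

Theorem theorem5p1 (d : measure_display) (T : measurableType d) (R : realType)
  (P : probability T R) (X Y : T -> R) (Xs Ys : nat -> T -> R) :
  unit_frechet P X -> unit_frechet P Y ->
  (* tail independence: lambda = lim_{u -> oo} P(X > u | Y > u) = 0 *)
  (fun u : R => fine (P ([set t | u < X t] `&` [set t | u < Y t])) /
                fine (P [set t | u < Y t])) @ +oo --> (0 : R) ->
  (* (Xs i, Ys i), i >= 0, are i.i.d. copies of (X, Y) *)
  (forall i, measurable_fun setT (Xs i)) ->
  (forall i, measurable_fun setT (Ys i)) ->
  mutually_independent P (fun i t => (Xs i t, Ys i t)) ->
  identically_distributed P (fun i t => (Xs i t, Ys i t)) (fun t => (X t, Y t)) ->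
  {ae P, forall t, qcorr Xs Ys n t @[n --> \oo] --> (0 : R)} /\
  (forall u : R, 0 < u ->
     {ae P, forall t, tail_qcorr u Xs Ys n t @[n --> \oo] --> (0 : R)}).
Proof.
move=> fX fY hlim mXs mYs ind idd.
have mX := proj1 fX; have mY := proj1 fY.
set Z := fun i t => (Xs i t, Ys i t).
have mZ : forall i, measurable_fun setT (Z i).
  by move=> i; apply: measurable_fun_pair.
have hit : forall A : set (R * R), measurable A ->
    P ((fun t => (X t, Y t)) @^-1` A) != 0%E -> {ae P, forall t, exists i, A (Z i t)}.
  move=> A mA PA; apply: (@ae_hit _ _ _ P Z A mZ ind) => //.
  - by move=> i; rewrite !idd.
  - by move=> i; rewrite !idd //; apply: measurableC.
  - by rewrite idd.
have mfst : measurable_fun [set: R * R] (fun p : R * R => p.1) := measurable_fst.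
have msnd : measurable_fun [set: R * R] (fun p : R * R => p.2) := measurable_snd.
have mcst : forall c : R, measurable_fun [set: R * R] (fun _ : R * R => c).
  by move=> c; exact: measurable_cst.
have mMul : forall (c : R) (f : R * R -> R), measurable_fun setT f ->
    measurable_fun [set: R * R] (fun p => c * f p).
  by move=> c f mf; apply: measurable_realfun.measurable_funM.
have mMulT : forall (c : R) (f : T -> R), measurable_fun setT f ->
    measurable_fun [set: T] (fun p => c * f p).
  by move=> c f mf; apply: measurable_realfun.measurable_funM => //; exact: measurable_cst.
have mcstT : forall c : R, measurable_fun [set: T] (fun _ : T => c).
  by move=> c; exact: measurable_cst.
have PXle0 : P [set t | X t <= 0] = 0%E by rewrite (proj2 fX) ltxx.
have PYle0 : P [set t | Y t <= 0] = 0%E by rewrite (proj2 fY) ltxx.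
have hitA : forall (U V : T -> R) (Us Vs : nat -> T -> R),
   (forall t, Z^~ t = (fun i => (Us i t, Vs i t))) -> True by [].
split.
-
  have ha : {ae P, forall t, forall N : nat,
      \forall n \near \oo, N%:R < \big[Num.max/0]_(i < n) (Ys i t / Xs i t)}.
    apply: ae_foralln => N.
    set M : R := N.+1%:R.
    have M1 : 1 <= M by rewrite /M ler1n.
    pose A := [set p : R * R | 0 < p.1] `&` [set p | M * p.1 < p.2].
    have mA : measurable A by apply: measurableI; apply: mset_lt => //; apply: mMul.
    have mWA : measurable ((fun t => (X t, Y t)) @^-1` A).
      by apply: measurableI; apply: mset_lt => //; apply: mMulT.
    have hpos : P ((fun t => (X t, Y t)) @^-1` A) != 0%E.
      have mle : measurable [set t | X t <= 0] by apply: mset_le.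
      have hS : P (((fun t => (X t, Y t)) @^-1` A) `|` [set t | X t <= 0]) != 0%E.
        apply: (@pos_lemma _ _ _ P X Y Y (((fun t => (X t, Y t)) @^-1` A) `|` [set t | X t <= 0]) M 0 fX fY fY hlim M1 (ltac:(by apply: measurableU))).
        move=> v v0 t /= hv.
        case: (ltP v (X t)) => hxv.
          left; split => //; apply: le_lt_trans hv; rewrite ler_peMl //; lra.
        case: (ltP 0 (X t)) => hx0; last by right; right.
        right; left; split => //=; apply: le_lt_trans hv; apply: ler_wpM2l; lra.
      apply/negP => /eqP h0; move/negP: hS; apply.
      have hU := measureU2 P mWA mle.
      apply/eqP/le_anti/andP; split; last exact: measure_ge0.
      apply: le_trans hU _.
      apply: (@le_trans _ _ (0 + 0)%E); last by rewrite adde0.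
      apply: leeD; [rewrite -[X in (_ <= X)%E]h0 | rewrite -[X in (_ <= X)%E]PXle0]; exact: lexx.
    apply: filterS (hit A mA hpos) => t [i [hi1 hi2]].
    rewrite /Z /= in hi1 hi2.
    move: (@ev_max R (fun j => Ys j t / Xs j t) N%:R); apply; exists i; apply: (lt_trans _ (ratio_gt hi1 hi2)).
    by rewrite /M ltr_nat.
  have hb : {ae P, forall t, forall N : nat,
      \forall n \near \oo, N%:R < \big[Num.max/0]_(i < n) (Xs i t / Ys i t)}.
    apply: ae_foralln => N.
    set M : R := N.+1%:R.
    have M1 : 1 <= M by rewrite /M ler1n.
    pose A := [set p : R * R | 0 < p.2] `&` [set p | M * p.2 < p.1].
    have mA : measurable A by apply: measurableI; apply: mset_lt => //; apply: mMul.
    have mWA : measurable ((fun t => (X t, Y t)) @^-1` A).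
      by apply: measurableI; apply: mset_lt => //; apply: mMulT.
    have hpos : P ((fun t => (X t, Y t)) @^-1` A) != 0%E.
      have mle : measurable [set t | Y t <= 0] by apply: mset_le.
      have hS : P (((fun t => (X t, Y t)) @^-1` A) `|` [set t | Y t <= 0]) != 0%E.
        apply: (@pos_lemma _ _ _ P X Y X (((fun t => (X t, Y t)) @^-1` A) `|` [set t | Y t <= 0]) M 0 fX fY fX hlim M1 (ltac:(by apply: measurableU))).
        move=> v v0 t /= hv.
        case: (ltP v (Y t)) => hyv.
          left; split => //; apply: le_lt_trans hv; rewrite ler_peMl //; lra.
        case: (ltP 0 (Y t)) => hy0; last by right; right.
        right; left; split => //=; apply: le_lt_trans hv; apply: ler_wpM2l; lra.
      apply/negP => /eqP h0; move/negP: hS; apply.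
      have hU := measureU2 P mWA mle.
      apply/eqP/le_anti/andP; split; last exact: measure_ge0.
      apply: le_trans hU _.
      apply: (@le_trans _ _ (0 + 0)%E); last by rewrite adde0.
      apply: leeD; [rewrite -[X in (_ <= X)%E]h0 | rewrite -[X in (_ <= X)%E]PYle0]; exact: lexx.
    apply: filterS (hit A mA hpos) => t [i [hi1 hi2]].
    rewrite /Z /= in hi1 hi2.
    move: (@ev_max R (fun j => Xs j t / Ys j t) N%:R); apply; exists i; apply: (lt_trans _ (ratio_gt hi1 hi2)).
    by rewrite /M ltr_nat.
  apply: filterS2 ha hb => t ha hb.
  exact: quot_cvg.
-
  move=> u u0.
  have ha : {ae P, forall t, forall N : nat,
      \forall n \near \oo, N%:R < \big[Num.max/0]_(i < n)
        ((u + exceed u (Ys i) t) / (u + exceed u (Xs i) t))}.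
    apply: ae_foralln => N.
    set M : R := N.+1%:R.
    have M1 : 1 <= M by rewrite /M ler1n.
    pose A := [set p : R * R | M * u < p.2] `&` [set p | M * p.1 < p.2].
    have mA : measurable A by apply: measurableI; apply: mset_lt => //; apply: mMul.
    have mWA : measurable ((fun t => (X t, Y t)) @^-1` A).
      by apply: measurableI; apply: mset_lt => //; apply: mMulT.
    have hpos : P ((fun t => (X t, Y t)) @^-1` A) != 0%E.
      apply: (@pos_lemma _ _ _ P X Y Y _ M u fX fY fY hlim M1 mWA).
      move=> v vu t /= hv.
      case: (ltP v (X t)) => hxv.
        left; split => //; apply: le_lt_trans hv; rewrite ler_peMl //; lra.
      right; split => /=.
        apply: le_lt_trans hv; apply: ler_wpM2l; lra.
      apply: le_lt_trans hv; apply: ler_wpM2l; lra.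
    apply: filterS (hit A mA hpos) => t [i [hi1 hi2]].
    rewrite /Z /= in hi1 hi2.
    move: (@ev_max R (fun j => (u + exceed u (Ys j) t) / (u + exceed u (Xs j) t)) N%:R); apply; exists i; rewrite /exceed; apply: (lt_trans _ (tail_ratio_gt u0 M1 hi1 hi2)).
    by rewrite /M ltr_nat.
  have hb : {ae P, forall t, forall N : nat,
      \forall n \near \oo, N%:R < \big[Num.max/0]_(i < n)
        ((u + exceed u (Xs i) t) / (u + exceed u (Ys i) t))}.
    apply: ae_foralln => N.
    set M : R := N.+1%:R.
    have M1 : 1 <= M by rewrite /M ler1n.
    pose A := [set p : R * R | M * u < p.1] `&` [set p | M * p.2 < p.1].
    have mA : measurable A by apply: measurableI; apply: mset_lt => //; apply: mMul.
    have mWA : measurable ((fun t => (X t, Y t)) @^-1` A).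
      by apply: measurableI; apply: mset_lt => //; apply: mMulT.
    have hpos : P ((fun t => (X t, Y t)) @^-1` A) != 0%E.
      apply: (@pos_lemma _ _ _ P X Y X _ M u fX fY fX hlim M1 mWA).
      move=> v vu t /= hv.
      case: (ltP v (Y t)) => hyv.
        left; split => //; apply: le_lt_trans hv; rewrite ler_peMl //; lra.
      right; split => /=.
        apply: le_lt_trans hv; apply: ler_wpM2l; lra.
      apply: le_lt_trans hv; apply: ler_wpM2l; lra.
    apply: filterS (hit A mA hpos) => t [i [hi1 hi2]].
    rewrite /Z /= in hi1 hi2.
    move: (@ev_max R (fun j => (u + exceed u (Xs j) t) / (u + exceed u (Ys j) t)) N%:R); apply; exists i; rewrite /exceed; apply: (lt_trans _ (tail_ratio_gt u0 M1 hi1 hi2)).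
    by rewrite /M ltr_nat.
  apply: filterS2 hb ha => t ha hb.
  exact: quot_cvg.
Qed.
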